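(* Let $\mathcal{H}$ be a complex Hilbert space of finite dimension $n\ge2$, $m\ge2$, $\mathcal{G}=(\{1,\dots,m\},E)$ a connected undirected graph, $\alpha\in(0,1)$, and $\sigma$ a self-adjoint operator on $\mathcal{H}$. Consider the quantum gossip algorithm: at each time $t$ an edge $(j,k)\in E$ is selected and $\rho(t+1)=(1-\alpha)\rho(t)+\alpha U_{(j,k)}\rho(t)U_{(j,k)}^\dagger$, where edges are selected either by periodically cycling through all edges, or independently at random according to a fixed distribution $\{q_{j,k}>0\}$ (in which case one considers either the expected evolution $\rho(t+1)=\sum q_{j,k}\big((1-\alpha)\rho(t)+\alpha U_{(j,k)}\rho(t)U_{(j,k)}^\dagger\big)$ or individual random trajectories). Let $z_\ell(t)=\mathrm{Tr}(\rho(t)\sigma^{(\ell)})$. Then under each of these edge-selection strategies, for every $\ell\in\{1,\dots,m\}$, $z_\ell(t)$ asymptotically converges to $\frac1m\sum_{k=1}^m z_k(0)$ (for random trajectories, in the sense that for any $\delta,\varepsilon>0$ there is $T$ with $\mathbb{P}[\sum_\ell |z_\ell(T)-\bar z|^2>\varepsilon\sum_\ell|z_\ell(0)-\bar z|^2]<\delta$, where $\bar z=\frac1m\sum_k z_k(0)$).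
   Context: For $X$ an operator on $\mathcal{H}$, $X^{(i)}=I^{\otimes(i-1)}\otimes X\otimes I^{\otimes(m-i)}$; $U_{(j,k)}$ is the unitary on $\mathcal{H}^{\otimes m}$ swapping tensor factors $j$ and $k$. *)

(* Defs.v *)
From HB Require Import structures.
From mathcomp Require Import all_boot all_order all_algebra.
From mathcomp Require Import all_fingroup complex.
From mathcomp Require Import reals.
Set Implicit Arguments. Unset Strict Implicit. Unset Printing Implicit Defensive.
Import Order.TTheory GRing.Theory Num.Theory.
Local Open Scope ring_scope.
Local Open Scope complex_scope.

Section QGossip.
Variables (R : realType) (n m : nat).
Local Notation C := R[i].

(* computational basis of H^{\otimes m}, H = C^n: functions 'I_m -> 'I_n
   (tensor factor i+1 of the paper is index i : 'I_m) *)
Definition basis := {ffun 'I_m -> 'I_n}.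

Definition op := basis -> basis -> C.

Definition opmul (A B : op) : op := fun x y => \sum_(z : basis) A x z * B z y.
Definition adj (A : op) : op := fun x y => (A y x)^*.
Definition trace (A : op) : C := \sum_(x : basis) A x x.
Definition opadd (A B : op) : op := fun x y => A x y + B x y.
Definition opscale (c : C) (A : op) : op := fun x y => c * A x y.

Definition psd (A : op) : Prop :=
  forall v : basis -> C, 0 <= \sum_(x : basis) \sum_(y : basis) (v x)^* * A x y * v y.
Definition density (A : op) : Prop := psd A /\ trace A = 1.

(* X^{(i)} = I^{\otimes(i-1)} \otimes X \otimes I^{\otimes(m-i)} *)
Definition embed1 (X : 'M[C]_n) (i : 'I_m) : op :=
  fun x y => X (x i) (y i) * (\prod_(l : 'I_m | l != i) (x l == y l)%:R).

(* U_{(j,k)}: |y> |-> |y with factors j and k swapped> *)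
Definition swap_basis (j k : 'I_m) (y : basis) : basis :=
  [ffun l => y (tperm j k l)].
Definition swapU (j k : 'I_m) : op :=
  fun x y => (x == swap_basis j k y)%:R.

Definition gossip_step (alpha : R) (p : 'I_m * 'I_m) (rho : op) : op :=
  opadd (opscale (1 - alpha)%:C rho)
        (opscale alpha%:C (opmul (opmul (swapU p.1 p.2) rho) (adj (swapU p.1 p.2)))).

Definition run (alpha : R) (s : seq ('I_m * 'I_m)) (rho0 : op) : op :=
  foldl (fun rho p => gossip_step alpha p rho) rho0 s.
Definition traj (alpha : R) (sel : nat -> 'I_m * 'I_m) (rho0 : op) (t : nat) : op :=
  run alpha (mkseq sel t) rho0.

Definition edges (e : rel 'I_m) : seq ('I_m * 'I_m) :=
  [seq p <- enum [pred p : 'I_m * 'I_m | true] | (nat_of_ord p.1 < nat_of_ord p.2)%N && e p.1 p.2].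

Definition simple_graph (e : rel 'I_m) := symmetric e /\ irreflexive e.
Definition connected_graph (e : rel 'I_m) := forall j k, connect e j k.

Definition exp_step (alpha : R) (e : rel 'I_m) (q : 'I_m * 'I_m -> R) (rho : op) : op :=
  fun x y => \sum_(p <- edges e) (q p)%:C * gossip_step alpha p rho x y.
Fixpoint exp_traj alpha e q (rho0 : op) (t : nat) : op :=
  if t is t'.+1 then exp_step alpha e q (exp_traj alpha e q rho0 t') else rho0.

Definition zloc (sigma : 'M[C]_n) (rho : op) (l : 'I_m) : C :=
  trace (opmul rho (embed1 sigma l)).
Definition zavg (sigma : 'M[C]_n) (rho : op) : C :=
  (m%:R)^-1 * \sum_(k : 'I_m) zloc sigma rho k.

Definition dev (sigma : 'M[C]_n) (rho : op) (zbar : C) : R :=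
  \sum_(l : 'I_m) ComplexField.Normc.normc (zloc sigma rho l - zbar) ^+ 2.

Definition cconv (u : nat -> C) (a : C) : Prop :=
  forall eps : R, 0 < eps -> exists T : nat, forall t, (T <= t)%N -> ComplexField.Normc.normc (u t - a) < eps.

(* probability, under i.i.d. selection of edges of e with law q (q supported
   on edges e), that the state after the first T selections satisfies P *)
Definition prob_traj (alpha : R) (e : rel 'I_m) (q : 'I_m * 'I_m -> R) (rho0 : op)
  (T : nat) (P : op -> bool) : R :=
  \sum_(s : T.-tuple ('I_m * 'I_m) | all (fun p => p \in edges e) s)
     (\prod_(i < T) q (tnth s i)) *
     (P (run alpha s rho0))%:R.
End QGossip.

(* Main.v *)
Require Import Defs.
From HB Require Import structures.
From mathcomp Require Import all_boot all_order all_algebra.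
From mathcomp Require Import all_fingroup complex.
From mathcomp Require Import reals.
From mathcomp Require Import ring lra.
From Stdlib Require Import FunctionalExtensionality.
Set Implicit Arguments. Unset Strict Implicit. Unset Printing Implicit Defensive.
Import Order.TTheory GRing.Theory Num.Theory.
Local Open Scope ring_scope.
Local Open Scope complex_scope.

Section RealGossip.
Variables (R : realType) (m : nat).
Implicit Types (u : 'I_m -> R) (p : 'I_m * 'I_m) (s : seq ('I_m * 'I_m)).
Variable a : R.

Definition wstep p u : 'I_m -> R := fun l => (1 - a) * u l + a * u (tperm p.1 p.2 l).
Definition runw s u := foldl (fun u p => wstep p u) u s.
Definition V (c : R) u := \sum_l (u l - c) ^+ 2.
Fixpoint Dsum s u : R := if s is p :: s' then (u p.1 - u p.2) ^+ 2 + Dsum s' (wstep p u) else 0.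

Lemma V_split p (c : R) u : p.1 != p.2 ->
  V c u = (u p.1 - c)^+2 + (u p.2 - c)^+2 + \sum_(l | (l != p.1) && (l != p.2)) (u l - c)^+2.
Proof.
move=> np; rewrite /V (bigD1 p.1) //= (bigD1 p.2) /=; last by rewrite eq_sym.
rewrite addrA; congr (_ + _); apply: eq_bigl => l; by rewrite andbC.
Qed.

Lemma V_step p c u : p.1 != p.2 ->
  V c (wstep p u) = V c u - 2 * a * (1 - a) * (u p.1 - u p.2)^+2.
Proof.
move=> np; rewrite !(V_split c _ np) /wstep tpermL tpermR.
have -> : \sum_(l | (l != p.1) && (l != p.2)) ((1 - a) * u l + a * u (tperm p.1 p.2 l) - c) ^+ 2
   = \sum_(l | (l != p.1) && (l != p.2)) (u l - c)^+2.
  apply: eq_bigr => l /andP[h1 h2]; rewrite tpermD 1?eq_sym //; congr (_ ^+ 2); ring.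
ring.
Qed.

Lemma sum_step p u : \sum_l wstep p u l = \sum_l u l.
Proof.
rewrite /wstep big_split /= -!mulr_sumr.
rewrite (reindex_inj (@perm_inj _ (tperm p.1 p.2))) /=; ring.
Qed.

Lemma one_step_diff p u x : 0 <= a <= 1 -> (u x - wstep p u x)^+2 <= (u p.1 - u p.2)^+2.
Proof.
move=> /andP[a0 a1]; rewrite /wstep.
have H : forall y z : R, (y - ((1 - a) * y + a * z))^+2 = a^+2 * (y - z)^+2.
  by move=> y z; ring.
have a21 : a^+2 <= 1 by rewrite expr_le1.
case: tpermP => [->|->|_ _].
- by rewrite H ler_piMl // sqr_ge0.
- rewrite H (_ : (u p.2 - u p.1)^+2 = (u p.1 - u p.2)^+2); last by ring.
  by rewrite ler_piMl // sqr_ge0.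
- by rewrite (_ : u x - _ = 0) ?expr0n ?sqr_ge0 //; ring.
Qed.

Lemma Dsum_ge0 s u : 0 <= Dsum s u.
Proof. by elim: s u => [|p s IH] u //=; rewrite addr_ge0 ?sqr_ge0. Qed.

Lemma runw_cons p s u : runw (p :: s) u = runw s (wstep p u).
Proof. by []. Qed.

Lemma runw_V s c u : (forall p, p \in s -> p.1 != p.2) ->
  V c (runw s u) = V c u - 2 * a * (1 - a) * Dsum s u.
Proof.
elim: s u => [|p s IH] u hs /=; first by rewrite mulr0 subr0.
rewrite IH; last by move=> q hq; apply: hs; rewrite inE hq orbT.
rewrite V_step; last by apply: hs; rewrite inE eqxx.
ring.
Qed.

Lemma sum_runw s u : \sum_l runw s u l = \sum_l u l.
Proof. by elim: s u => [|p s IH] u //=; rewrite IH sum_step. Qed.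

Lemma sq3 (x y z : R) : (x + y - z)^+2 <= 3 * (x^+2 + y^+2 + z^+2).
Proof.
rewrite -subr_ge0 (_ : _ - _ = (x - y)^+2 + (x + z)^+2 + (y + z)^+2); last by ring.
by rewrite !addr_ge0 ?sqr_ge0.
Qed.

Lemma arith9 (A B C d D N : R) : A^+2 <= d -> C^+2 <= d -> B^+2 <= N * D -> 1 <= N -> 0 <= D ->
  (A + B - C)^+2 <= 9 * N * (d + D).
Proof.
move=> h1 h2 hB h9 D0; have h3 := sq3 A B C.
have d0 : 0 <= d by apply: le_trans h1; rewrite sqr_ge0.
have h4 : 0 <= (N - 1) * d by rewrite mulr_ge0 ?subr_ge0.
have h5 : 0 <= N * D by rewrite mulr_ge0 // (le_trans _ h9).
nra.
Qed.

Lemma edge_bound s u p : 0 <= a <= 1 -> p \in s ->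
  (u p.1 - u p.2)^+2 <= 9 ^+ (size s) * Dsum s u.
Proof.
move=> ha; elim: s u => [|q s IH] u; first by rewrite in_nil.
rewrite /=.
have h9 : 1 <= (9 : R) ^+ (size s).
  by apply: exprn_ege1; lra.
have D0 := Dsum_ge0 s (wstep q u).
set N := (9 : R) ^+ size s in h9 *.
have -> : (9 : R) ^+ (size s).+1 = 9 * N by rewrite exprS.
rewrite inE => /orP[/eqP ->|ps].
  set d := (u q.1 - u q.2)^+2; have d0 : 0 <= d by rewrite sqr_ge0.
  have h1 : 0 <= (N - 1) * d by rewrite mulr_ge0 // subr_ge0.
  have h2 : 0 <= N * Dsum s (wstep q u) by rewrite mulr_ge0 // (le_trans _ h9).
  nra.
have hB := IH (wstep q u) ps.
have h1 := one_step_diff q u p.1 ha; have h2 := one_step_diff q u p.2 ha.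
rewrite (_ : u p.1 - u p.2 = (u p.1 - wstep q u p.1) + (wstep q u p.1 - wstep q u p.2)
   - (u p.2 - wstep q u p.2)); last by ring.
exact: arith9.
Qed.


Lemma le_sum_mem (T : eqType) (r : seq T) (F : T -> R) x :
  x \in r -> (forall y, 0 <= F y) -> F x <= \sum_(y <- r) F y.
Proof.
move=> xr F0; rewrite (big_rem x) //= lerDl sumr_ge0 //.
Qed.

Definition S (e : rel 'I_m) u := \sum_(p <- edges e) (u p.1 - u p.2)^+2.

Lemma S_ge0 e u : 0 <= S e u.
Proof. by rewrite /S sumr_ge0 // => p _; rewrite sqr_ge0. Qed.

Lemma mem_edges e p : (p \in edges e) = (p.1 < p.2)%N && e p.1 p.2.
Proof. by rewrite /edges mem_filter mem_enum andbT. Qed.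

Lemma edge_le_S (e : rel 'I_m) u (j k : 'I_m) : simple_graph e -> e j k -> (u j - u k)^+2 <= S e u.
Proof.
move=> [sy ir] ejk.
have F0 : forall p : 'I_m * 'I_m, 0 <= (u p.1 - u p.2)^+2 by move=> p; rewrite sqr_ge0.
case: (ltngtP j k) => h.
- by apply: (le_sum_mem (x := (j, k))) => //; rewrite mem_edges /= h ejk.
- rewrite (_ : (u j - u k)^+2 = (u k - u j)^+2); last by ring.
  by apply: (le_sum_mem (x := (k, j))) => //; rewrite mem_edges /= h sy ejk.
- by move: ejk; rewrite (val_inj h) ir.
Qed.

Lemma path_bound (e : rel 'I_m) u (x : 'I_m) (p : seq 'I_m) : simple_graph e -> path e x p ->
  (u (last x p) - u x)^+2 <= 4 ^+ (size p) * S e u.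
Proof.
move=> hs; elim: p x => [|y p IH] x /=.
  by move=> _; rewrite subrr expr0n /= mul1r S_ge0.
move=> /andP[exy hp]; have h1 := IH y hp; have h2 := edge_le_S u hs exy.
have S0 := S_ge0 e u.
have h4 : 1 <= (4 : R) ^+ size p by apply: exprn_ege1; lra.
have -> : (4:R) ^+ (size p).+1 = 4 * 4 ^+ size p by rewrite exprS.
rewrite (_ : u (last y p) - u x = (u (last y p) - u y) + (u y - u x)); last by ring.
move: h1 h2 h4; set A := u (last y p) - u y; set B := u y - u x.
rewrite (_ : (u x - u y)^+2 = B^+2); last by rewrite /B; ring.
set N := (4 : R) ^+ size p; set T := S e u => h1 h2 h4.
have h5 : 0 <= (N - 1) * T by rewrite mulr_ge0 // subr_ge0.
have h6 := sqr_ge0 (A - B).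
nra.
Qed.

Lemma conn_bound (e : rel 'I_m) u (j k : 'I_m) : simple_graph e -> connected_graph e ->
  (u k - u j)^+2 <= 4 ^+ m * S e u.
Proof.
move=> hs hc; have /connectP [p hp ->] := hc j k.
case: (shortenP hp) => p' hp' up' _.
apply: (le_trans (path_bound u hs hp')); apply: ler_wpM2r; first exact: S_ge0.
apply: ler_weXn2l; first lra.
have := max_card (mem (j :: p')); rewrite card_ord (card_uniqP up') /=.
by move=> h; apply: ltnW.
Qed.

Lemma mean_min u c : (0 < m)%N -> V ((m%:R)^-1 * \sum_l u l) u <= V c u.
Proof.
move=> m0; set mu := _ * _.
have hm : (m%:R : R) != 0 by rewrite pnatr_eq0 -lt0n.
have s0 : \sum_l (u l - mu) = 0.
  have E : (m%:R^-1 : R) *+ m = 1 by rewrite -[RHS](mulVf hm) mulr_natr.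
  by rewrite sumrB sumr_const card_ord /mu -mulrnAl E mul1r subrr.
have -> : V c u = V mu u + \sum_(l : 'I_m) (mu - c)^+2 + 2 * (mu - c) * \sum_l (u l - mu).
  rewrite /V mulr_sumr -!big_split /=; apply: eq_bigr => l _; ring.
by rewrite s0 mulr0 addr0 lerDl sumr_ge0 // => l _; rewrite sqr_ge0.
Qed.

Lemma fiedler e u : (0 < m)%N -> simple_graph e -> connected_graph e ->
  V ((m%:R)^-1 * \sum_l u l) u <= m%:R * 4 ^+ m * S e u.
Proof.
move=> m0 hs hc; pose j := Ordinal m0.
apply: (le_trans (mean_min u (u j) m0)).
have <- : \sum_(l : 'I_m) (4 ^+ m * S e u) = m%:R * 4 ^+ m * S e u.
  by rewrite sumr_const card_ord -mulrA mulr_natl.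
rewrite /V; apply: ler_sum => l _.
exact: conn_bound.
Qed.


Lemma contract_gen (Vv D M c : R) : 0 < M -> 0 <= c -> Vv <= M * D ->
  Vv - c * D <= (1 - c / M) * Vv.
Proof.
move=> M0 c0 h; rewrite mulrBl mul1r lerB // (_ : c / M * Vv = c * (Vv / M)); last first.
  by rewrite mulrAC mulrA.
by rewrite ler_wpM2l // ler_pdivrMr // mulrC.
Qed.

Definition mu u := (m%:R)^-1 * \sum_l u l.

Lemma edges_neq e p : p \in edges e -> p.1 != p.2.
Proof.
rewrite mem_edges => /andP[lt _]; apply/negP => /eqP h.
by rewrite h ltnn in lt.
Qed.

Lemma period_contract e es u : (0 < m)%N -> simple_graph e -> connected_graph e ->
  0 <= a <= 1 -> perm_eq es (edges e) ->
  V (mu u) (runw es u) <=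
  (1 - 2 * a * (1 - a) / (m%:R * 4 ^+ m * (size es)%:R * 9 ^+ (size es) + 1)) * V (mu u) u.
Proof.
move=> m0 hs hc ha hp.
have hne : forall p, p \in es -> p.1 != p.2.
  by move=> p; rewrite (perm_mem hp); apply: edges_neq.
rewrite runw_V //.
have D0 := Dsum_ge0 es u.
have A0 : 0 <= m%:R * (4:R) ^+ m by rewrite mulr_ge0 // exprn_ge0.
have B0 : 0 <= (size es)%:R * (9:R) ^+ (size es) by rewrite mulr_ge0 // exprn_ge0.
apply: contract_gen.
- by rewrite ltr_wpDl // -mulrA mulr_ge0.
- by case/andP: ha => ??; rewrite mulr_ge0 // ?mulr_ge0 // subr_ge0.
apply: (le_trans (fiedler u m0 hs hc)).
have HS : S e u <= (size es)%:R * 9 ^+ (size es) * Dsum es u.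
  rewrite /S -(perm_big _ hp) big_seq.
  apply: (le_trans (ler_sum _ (G := fun _ => 9 ^+ size es * Dsum es u) _)).
    by move=> p hpe; apply: edge_bound.
  by rewrite -big_seq big_const_seq count_predT iter_addr_0 -mulrA mulr_natl.
apply: (le_trans (ler_wpM2l A0 HS)).
rewrite !mulrA mulrDl mul1r lerDl //.
Qed.

Lemma rand_step e q qm u : (0 < m)%N -> simple_graph e -> connected_graph e ->
  0 <= a <= 1 -> 0 <= qm -> (forall p, p \in edges e -> qm <= q p) ->
  \sum_(p <- edges e) q p = 1 ->
  \sum_(p <- edges e) q p * V (mu u) (wstep p u) <=
  (1 - 2 * a * (1 - a) * qm / (m%:R * 4 ^+ m + 1)) * V (mu u) u.
Proof.
move=> m0 hs hc ha qm0 hq hsum.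
have c0 : 0 <= 2 * a * (1 - a) by case/andP: ha => ??; rewrite mulr_ge0 // ?mulr_ge0 // subr_ge0.
rewrite big_seq.
under eq_bigr => p hp do rewrite V_step ?(edges_neq hp) //.
have -> : \sum_(p <- edges e | p \in edges e)
    q p * (V (mu u) u - 2 * a * (1 - a) * (u p.1 - u p.2) ^+ 2)
  = V (mu u) u - 2 * a * (1 - a) * \sum_(p <- edges e | p \in edges e) q p * (u p.1 - u p.2) ^+ 2.
  transitivity (\sum_(p <- edges e | p \in edges e) (q p * V (mu u) u)
     - \sum_(p <- edges e | p \in edges e) (2 * a * (1 - a) * (q p * (u p.1 - u p.2) ^+ 2))).
    by rewrite -sumrB; apply: eq_bigr => p _; ring.
  by rewrite -mulr_suml -mulr_sumr -big_seq hsum mul1r.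
have HS : qm * S e u <= \sum_(p <- edges e | p \in edges e) q p * (u p.1 - u p.2) ^+ 2.
  rewrite /S big_seq mulr_sumr; apply: ler_sum => p hp.
  by rewrite ler_wpM2r ?sqr_ge0 ?hq.
apply: (le_trans (_ : _ <= V (mu u) u - 2 * a * (1 - a) * qm * S e u)).
  by rewrite lerB // -mulrA ler_wpM2l.
apply: contract_gen.
- by rewrite ltr_wpDl // mulr_ge0 // exprn_ge0.
- by rewrite mulr_ge0.
apply: (le_trans (fiedler u m0 hs hc)).
by rewrite mulrDl mul1r lerDl S_ge0.
Qed.

Lemma jensen (I : eqType) (r : seq I) (q w : I -> R) c :
  (forall i, i \in r -> 0 <= q i) -> \sum_(i <- r) q i = 1 ->
  (\sum_(i <- r) q i * w i - c)^+2 <= \sum_(i <- r) q i * (w i - c)^+2.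
Proof.
move=> q0 hs.
set B := \sum_(i <- r) q i * w i - c.
have EB : \sum_(i <- r) q i * (w i - c) = B.
  rewrite /B -[c in RHS]mul1r -hs mulr_suml -sumrB; apply: eq_bigr => i _; ring.
have : 0 <= \sum_(i <- r) q i * (w i - c - B)^+2.
  by rewrite big_seq sumr_ge0 // => i hp; rewrite mulr_ge0 ?q0 ?sqr_ge0.
have -> : \sum_(i <- r) q i * (w i - c - B)^+2 =
   \sum_(i <- r) q i * (w i - c)^+2 - 2 * B * \sum_(i <- r) q i * (w i - c)
   + B^+2 * \sum_(i <- r) q i.
  rewrite !mulr_sumr -sumrB -big_split /=; apply: eq_bigr => i _; ring.
rewrite EB hs; lra.
Qed.

Definition expw (q : 'I_m * 'I_m -> R) (r : seq ('I_m * 'I_m)) u : 'I_m -> R :=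
  fun l => \sum_(p <- r) q p * wstep p u l.

Lemma expw_V q r u c : (forall p, p \in r -> 0 <= q p) -> \sum_(p <- r) q p = 1 ->
  V c (expw q r u) <= \sum_(p <- r) q p * V c (wstep p u).
Proof.
move=> q0 hs; rewrite /V /expw.
have -> : \sum_(p <- r) q p * \sum_l (wstep p u l - c) ^+ 2
   = \sum_l \sum_(p <- r) q p * (wstep p u l - c) ^+ 2.
  by rewrite exchange_big /=; apply: eq_bigr => p _; rewrite mulr_sumr.
apply: ler_sum => l _; exact: jensen.
Qed.

Lemma expw_sum q r u : \sum_(p <- r) q p = 1 -> \sum_l expw q r u l = \sum_l u l.
Proof.
move=> hs; rewrite /expw exchange_big /=.
under eq_bigr => p _ do rewrite -mulr_sumr sum_step.
by rewrite -mulr_suml hs mul1r.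
Qed.

End RealGossip.

Lemma pow_small (R : realType) (r eps : R) : 0 <= r < 1 -> 0 < eps -> exists T, r ^+ T < eps.
Proof.
move=> /andP[r0 r1] e0; set g := 1 - r.
have g0 : 0 < g by rewrite /g subr_gt0.
have H : forall T, r ^+ T * (1 + T%:R * g) <= 1.
  elim=> [|T IH]; first by rewrite expr0 mul0r addr0 mul1r.
  have rT0 : 0 <= r ^+ T by rewrite exprn_ge0.
  have rT1 : r ^+ T <= 1 by rewrite exprn_ile1 // ltW.
  rewrite exprS -natr1 /g; set x := r ^+ T in rT0 rT1 IH *.
  move: IH; rewrite /g; set t := (T%:R : R) => IH.
  have h1 : 0 <= r * (1 - x * (1 + t * (1 - r))) by rewrite mulr_ge0 // subr_ge0.
  have h2 : 0 <= r * (1 - r) * (1 - x) by rewrite !mulr_ge0 // subr_ge0 // ltW.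
  have h3 := sqr_ge0 (1 - r).
  nra.
have b0 : 0 <= (eps * g)^-1 by rewrite invr_ge0 ltW // mulr_gt0.
exists (Num.bound ((eps * g)^-1)).
set T := Num.bound _.
have hT := archi_boundP b0; rewrite -/T in hT.
have hT' : 1 < T%:R * g * eps.
  move: hT; rewrite -[X in X < _]mul1r ltr_pdivrMr ?mulr_gt0 // => h.
  by rewrite (_ : T%:R * g * eps = T%:R * (eps * g)) //; ring.
have := H T; have := exprn_ge0 T r0; set x := r ^+ T => x0 hx.
nra.
Qed.


Section Ops.
Variables (R : realType) (n m : nat).
Local Notation C := R[i].
Local Notation op := (op R n m).
Local Notation basis := (basis n m).

Lemma sw_inv (j k : 'I_m) (y : basis) : @swap_basis n m j k (@swap_basis n m j k y) = y.
Proof. by apply/ffunP => l; rewrite !ffunE tpermK. Qed.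

Lemma sw_inj (j k : 'I_m) : injective (@swap_basis n m j k).
Proof. exact: (can_inj (sw_inv j k)). Qed.

Lemma sum_swapL (j k : 'I_m) (f : basis -> C) x :
  \sum_z ((x == @swap_basis n m j k z)%:R * f z) = f (@swap_basis n m j k x).
Proof.
rewrite (bigD1 (@swap_basis n m j k x)) //= sw_inv eqxx mul1r big1 ?addr0 // => z hz.
rewrite (_ : (x == @swap_basis n m j k z) = false) ?mul0r //; apply/negbTE.
by apply: contra hz => /eqP ->; rewrite sw_inv.
Qed.

Lemma conj_nat (b : bool) : ((b%:R : C)^*)%C = b%:R.
Proof. by case: b => /=; rewrite ?mulr1n ?mulr0n /=; apply/eqP; rewrite eq_complex /= ?oppr0 ?eqxx. Qed.

Lemma conj_op (j k : 'I_m) (rho : op) x y :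
  opmul (opmul (@swapU R n m j k) rho) (adj (@swapU R n m j k)) x y =
  rho (@swap_basis n m j k x) (@swap_basis n m j k y).
Proof.
rewrite /opmul /adj /swapU.
under eq_bigr => w _ do rewrite sum_swapL conj_nat.
rewrite (bigD1 (@swap_basis n m j k y)) //= sw_inv eqxx mulr1 big1 ?addr0 // => w hw.
rewrite (_ : (y == @swap_basis n m j k w) = false) ?mulr0 //; apply/negbTE.
by apply: contra hw => /eqP ->; rewrite sw_inv.
Qed.

Lemma embed1_sw (sigma : 'M[C]_n) (l j k : 'I_m) x y :
  embed1 sigma l (@swap_basis n m j k y) (@swap_basis n m j k x) = embed1 sigma (tperm j k l) y x.
Proof.
rewrite /embed1 !ffunE; congr (_ * _).
rewrite [RHS](reindex_inj (@perm_inj _ (tperm j k))) /=.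
apply: eq_big => i; first by rewrite (inj_eq (@perm_inj _ (tperm j k))).
by rewrite !ffunE.
Qed.

Lemma opmul_unfold (A B : op) x y : opmul A B x y = \sum_z A x z * B z y.
Proof. by []. Qed.

Lemma zloc_conj (sigma : 'M[C]_n) (rho : op) (j k l : 'I_m) :
  trace (opmul (opmul (opmul (@swapU R n m j k) rho) (adj (@swapU R n m j k))) (embed1 sigma l))
  = zloc sigma rho (tperm j k l).
Proof.
rewrite /zloc /trace.
transitivity (\sum_x \sum_y rho (@swap_basis n m j k x) (@swap_basis n m j k y) * embed1 sigma l y x).
  by apply: eq_bigr => x _; rewrite opmul_unfold; apply: eq_bigr => y _; rewrite conj_op.
under [RHS]eq_bigr => x _ do rewrite opmul_unfold.
rewrite (reindex_inj (@sw_inj j k)) /=.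
apply: eq_bigr => x _; rewrite (reindex_inj (@sw_inj j k)) /=.
by apply: eq_bigr => y _; rewrite !sw_inv embed1_sw.
Qed.

Lemma zloc_step (sigma : 'M[C]_n) (alpha : R) p (rho : op) l :
  zloc sigma (gossip_step alpha p rho) l =
  (1 - alpha)%:C * zloc sigma rho l + alpha%:C * zloc sigma rho (tperm p.1 p.2 l).
Proof.
rewrite -zloc_conj /zloc /trace /opmul /gossip_step /opadd /opscale.
rewrite !mulr_sumr -big_split /=; apply: eq_bigr => x _.
rewrite !mulr_sumr -big_split /=; apply: eq_bigr => y _.
by rewrite mulrDl !mulrA.
Qed.

Lemma zloc_exp (sigma : 'M[C]_n) (alpha : R) e q (rho : op) l :
  zloc sigma (exp_step alpha e q rho) l =
  \sum_(p <- edges e) (q p)%:C * zloc sigma (gossip_step alpha p rho) l.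
Proof.
rewrite /zloc /trace /opmul /exp_step.
under [RHS]eq_bigr => p _ do rewrite mulr_sumr.
rewrite [RHS]exchange_big /=; apply: eq_bigr => x _.
under [RHS]eq_bigr => p _ do rewrite mulr_sumr.
rewrite [RHS]exchange_big /=; apply: eq_bigr => y _.
by rewrite mulr_suml; apply: eq_bigr => p _; rewrite mulrA.
Qed.
End Ops.


Section Lift.
Variables (R : realType) (n m : nat) (sigma : 'M[R[i]]_n) (alpha : R).
Local Notation C := R[i].
Local Notation op := (op R n m).

Lemma cReD (x y : C) : complex.Re (x + y) = complex.Re x + complex.Re y. Proof. by case: x => ? ?; case: y => ? ? /=. Qed.
Lemma cImD (x y : C) : complex.Im (x + y) = complex.Im x + complex.Im y. Proof. by case: x => ? ?; case: y => ? ? /=. Qed.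
Lemma cReB (x y : C) : complex.Re (x - y) = complex.Re x - complex.Re y. Proof. by case: x => ? ?; case: y => ? ? /=. Qed.
Lemma cImB (x y : C) : complex.Im (x - y) = complex.Im x - complex.Im y. Proof. by case: x => ? ?; case: y => ? ? /=. Qed.
Lemma cReM (x : R) (y : C) : complex.Re (x%:C * y) = x * complex.Re y.
Proof. by case: y => c d /=; rewrite mul0r subr0. Qed.
Lemma cImM (x : R) (y : C) : complex.Im (x%:C * y) = x * complex.Im y.
Proof. by case: y => c d /=; rewrite mul0r addr0. Qed.
Lemma cRe_sum (I : Type) (r : seq I) (F : I -> C) : complex.Re (\sum_(i <- r) F i) = \sum_(i <- r) complex.Re (F i).
Proof. exact: (big_morph _ cReD). Qed.
Lemma cIm_sum (I : Type) (r : seq I) (F : I -> C) : complex.Im (\sum_(i <- r) F i) = \sum_(i <- r) complex.Im (F i).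
Proof. exact: (big_morph _ cImD). Qed.

Lemma normc2 (x : C) : ComplexField.Normc.normc x ^+ 2 = complex.Re x ^+ 2 + complex.Im x ^+ 2.
Proof. by case: x => c d /=; rewrite sqr_sqrtr // addr_ge0 ?sqr_ge0. Qed.

Section Proj.
Variable f : C -> R.
Hypothesis fD : forall x y, f (x + y) = f x + f y.
Hypothesis fM : forall (x : R) y, f (x%:C * y) = x * f y.
Hypothesis f_sum : forall (I : Type) (r : seq I) (F : I -> C), f (\sum_(i <- r) F i) = \sum_(i <- r) f (F i).

Definition uf (rho : op) : 'I_m -> R := fun l => f (zloc sigma rho l).

Lemma uf_step p rho : uf (gossip_step alpha p rho) = wstep alpha p (uf rho).
Proof.
by apply: functional_extensionality => l; rewrite /uf zloc_step fD !fM.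
Qed.

Lemma run_cons p s (rho : op) : run alpha (p :: s) rho = run alpha s (gossip_step alpha p rho).
Proof. by []. Qed.

Lemma uf_run s rho : uf (run alpha s rho) = runw alpha s (uf rho).
Proof. by elim: s rho => [|p s IH] rho //; rewrite run_cons IH uf_step. Qed.

Lemma uf_exp e q rho : uf (exp_step alpha e q rho) = expw alpha q (edges e) (uf rho).
Proof.
apply: functional_extensionality => l; rewrite /uf zloc_exp f_sum /expw.
by apply: eq_bigr => p _; rewrite fM -uf_step.
Qed.
End Proj.

Definition ur := uf (@complex.Re R).
Definition ui := uf (@complex.Im R).

Lemma dev_eq (rho : op) c : dev sigma rho c = V (complex.Re c) (ur rho) + V (complex.Im c) (ui rho).
Proof.
rewrite /dev /V -big_split /=; apply: eq_bigr => l _.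
by rewrite normc2 cReB cImB.
Qed.

Lemma dev_ge0 (rho : op) c : 0 <= dev sigma rho c.
Proof. by rewrite /dev sumr_ge0 // => l _; rewrite sqr_ge0. Qed.

Lemma term_le_dev (rho : op) c l :
  ComplexField.Normc.normc (zloc sigma rho l - c) ^+ 2 <= dev sigma rho c.
Proof.
rewrite /dev (bigD1 l) //= lerDl sumr_ge0 // => k _.
by rewrite sqr_ge0.
Qed.

Lemma mu_avg (rho : op) :
  complex.Re (zavg sigma rho) = mu (ur rho) /\ complex.Im (zavg sigma rho) = mu (ui rho).
Proof.
have hm : (m%:R : C)^-1 = ((m%:R : R)^-1)%:C.
  by rewrite -(rmorph_nat (real_complex R)) fmorphV.
rewrite /zavg hm cReM cImM /mu cRe_sum cIm_sum //.
Qed.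
End Lift.


Section Main.
Variables (R : realType) (n m : nat) (e : rel 'I_m) (alpha : R)
  (sigma : 'M[R[i]]_n) (rho0 : op R n m).
Hypotheses (hm : (2 <= m)%N) (hs : simple_graph e) (hc : connected_graph e)
  (ha : 0 < alpha < 1).
Local Notation C := R[i].
Local Notation op := (op R n m).
Local Notation zb := (zavg sigma rho0).
Local Notation c1 := (complex.Re zb).
Local Notation c2 := (complex.Im zb).
Local Notation dv rho := (dev sigma rho zb).

Lemma m0 : (0 < m)%N. Proof. by apply: leq_trans hm. Qed.
Lemma ha' : 0 <= alpha <= 1. Proof. by case/andP: ha => h1 h2; rewrite !ltW. Qed.
Lemma cpos : 0 < 2 * alpha * (1 - alpha).
Proof. by case/andP: ha => h1 h2; rewrite !mulr_gt0 // subr_gt0. Qed.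
Lemma cle1 : 2 * alpha * (1 - alpha) <= 1.
Proof. have := sqr_ge0 (2 * alpha - 1); nra. Qed.

Lemma ur_run s (rho : op) : ur sigma (run alpha s rho) = runw alpha s (ur sigma rho).
Proof. exact: (uf_run sigma alpha (@cReD R) (@cReM R)). Qed.
Lemma ui_run s (rho : op) : ui sigma (run alpha s rho) = runw alpha s (ui sigma rho).
Proof. exact: (uf_run sigma alpha (@cImD R) (@cImM R)). Qed.
Lemma ur_step p (rho : op) : ur sigma (gossip_step alpha p rho) = wstep alpha p (ur sigma rho).
Proof. exact: (uf_step sigma alpha (@cReD R) (@cReM R)). Qed.
Lemma ui_step p (rho : op) : ui sigma (gossip_step alpha p rho) = wstep alpha p (ui sigma rho).
Proof. exact: (uf_step sigma alpha (@cImD R) (@cImM R)). Qed.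
Lemma ur_exp q (rho : op) : ur sigma (exp_step alpha e q rho) = expw alpha q (edges e) (ur sigma rho).
Proof. exact: (uf_exp sigma alpha (@cReD R) (@cReM R) (@cRe_sum R)). Qed.
Lemma ui_exp q (rho : op) : ui sigma (exp_step alpha e q rho) = expw alpha q (edges e) (ui sigma rho).
Proof. exact: (uf_exp sigma alpha (@cImD R) (@cImM R) (@cIm_sum R)). Qed.

Definition mc (rho : op) := mu (ur sigma rho) = c1 /\ mu (ui sigma rho) = c2.

Lemma mc0 : mc rho0.
Proof. by have [h1 h2] := mu_avg sigma rho0; split. Qed.

Lemma mc_run s (rho : op) : mc rho -> mc (run alpha s rho).
Proof. by rewrite /mc /mu ur_run ui_run !sum_runw. Qed.

Lemma mc_step p (rho : op) : mc rho -> mc (gossip_step alpha p rho).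
Proof. by rewrite /mc /mu ur_step ui_step !sum_step. Qed.

Lemma dev_mono s (rho : op) c : (forall p, p \in s -> p \in edges e) ->
  dev sigma (run alpha s rho) c <= dev sigma rho c.
Proof.
move=> hsub; have hne : forall p, p \in s -> p.1 != p.2 by move=> p /hsub /edges_neq.
rewrite !dev_eq ur_run ui_run !runw_V //.
have := Dsum_ge0 alpha s (ur sigma rho); have := Dsum_ge0 alpha s (ui sigma rho).
have := cpos; nra.
Qed.


Lemma rho_range (c M : R) : 0 < c <= 1 -> 1 <= M -> 0 <= 1 - c / M < 1.
Proof.
move=> /andP[c0 c1'] M1; have M0 : 0 < M by apply: lt_le_trans M1.
have h : c / M <= 1 by rewrite ler_pdivrMr // mul1r (le_trans c1').
apply/andP; split; first by rewrite subr_ge0.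
by rewrite ltrBlDr ltrDl divr_gt0.
Qed.

Definition rho1 (K : nat) : R :=
  1 - 2 * alpha * (1 - alpha) / (m%:R * 4 ^+ m * K%:R * 9 ^+ K + 1).

Lemma rho1_range K : 0 <= rho1 K < 1.
Proof.
apply: rho_range; first by rewrite cpos cle1.
by rewrite lerDr !mulr_ge0 // exprn_ge0.
Qed.

Lemma dev_period es (rho : op) : perm_eq es (edges e) -> mc rho ->
  dv (run alpha es rho) <= rho1 (size es) * dv rho.
Proof.
move=> hp [h1 h2]; rewrite !dev_eq ur_run ui_run mulrDr -h1 -h2.
by apply: lerD; apply: (period_contract _ m0 hs hc ha' hp).
Qed.

Section Q.
Variables (q : 'I_m * 'I_m -> R) (qm : R).
Hypotheses (qm0 : 0 < qm) (qm1 : qm <= 1) (hq : forall p, p \in edges e -> qm <= q p)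
  (hsum : \sum_(p <- edges e) q p = 1).

Definition rho2 : R := 1 - 2 * alpha * (1 - alpha) * qm / (m%:R * 4 ^+ m + 1).

Lemma rho2_range : 0 <= rho2 < 1.
Proof.
apply: rho_range; last by rewrite lerDr !mulr_ge0 // exprn_ge0.
rewrite mulr_gt0 ?cpos //=; apply: le_trans cle1.
by rewrite ler_piMr // ltW // cpos.
Qed.

Lemma q0 p : p \in edges e -> 0 <= q p.
Proof. by move=> /hq; apply: le_trans; rewrite ltW. Qed.

Lemma dev_rand (rho : op) : mc rho ->
  \sum_(p <- edges e) q p * dv (gossip_step alpha p rho) <= rho2 * dv rho.
Proof.
move=> [h1 h2].
under eq_bigr => p _ do rewrite dev_eq ur_step ui_step mulrDr.
rewrite big_split /= dev_eq mulrDr -h1 -h2.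
by apply: lerD; apply: rand_step; rewrite ?m0 ?ha' // ltW.
Qed.

Lemma dev_exp (rho : op) : mc rho ->
  dv (exp_step alpha e q rho) <= rho2 * dv rho.
Proof.
move=> hmc; apply: le_trans (dev_rand hmc).
case: hmc => h1 h2.
rewrite dev_eq ur_exp ui_exp.
under eq_bigr => p _ do rewrite dev_eq ur_step ui_step mulrDr.
rewrite big_split /=.
by apply: lerD; apply: expw_V => //; apply: q0.
Qed.

Lemma mc_exp (rho : op) : mc rho -> mc (exp_step alpha e q rho).
Proof. by rewrite /mc /mu ur_exp ui_exp !expw_sum. Qed.

End Q.

End Main.

Lemma finish (R : realType) (z : nat -> R[i]) (zb : R[i]) (f : nat -> R) :
  (forall t, ComplexField.Normc.normc (z t - zb) ^+ 2 <= f t) ->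
  (forall eps, 0 < eps -> exists T, forall t, (T <= t)%N -> f t < eps) -> cconv z zb.
Proof.
move=> hz hf eps e0; have [T hT] := hf (eps ^+ 2) (exprn_gt0 _ e0).
exists T => t /hT ht; have := le_lt_trans (hz t) ht.
have : 0 <= ComplexField.Normc.normc (z t - zb).
  by case: (z t - zb) => a b /=; rewrite sqrtr_ge0.
set x := ComplexField.Normc.normc _ => x0 hx; nra.
Qed.

Lemma geom (R : realType) (r d : R) : 0 <= r < 1 -> 0 <= d ->
  forall eps, 0 < eps -> exists N, forall k, (N <= k)%N -> r ^+ k * d < eps.
Proof.
move=> hr d0 eps e0; have [N hN] := pow_small hr (divr_gt0 e0 (ltr_pwDr ltr01 d0)).
case/andP: hr => r0 r1.
exists N => k hk.
have h1 : r ^+ k <= r ^+ N by rewrite ler_wiXn2l // ltW.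
have h2 : r ^+ k * d <= r ^+ N * (d + 1).
  by rewrite ler_pM ?exprn_ge0 // lerDl.
by apply: le_lt_trans h2 _; rewrite -ltr_pdivlMr // ltr_pwDr.
Qed.


Lemma mem_body_cons (T : eqType) (y x : T) s : x \in s -> x \in y :: s.
Proof. by move=> h; rewrite inE h orbT. Qed.

Lemma minpos (R : realType) (T : eqType) (s : seq T) (f : T -> R) :
  (forall x, x \in s -> 0 < f x) ->
  exists c, [/\ 0 < c, c <= 1 & forall x, x \in s -> c <= f x].
Proof.
elim: s => [|y s IH] hf; first by exists 1; split => //; rewrite ltr01.
have [c [c0 c1 hc]] := IH (fun x hx => hf x (@mem_body_cons _ y x s hx)).
have fy : 0 < f y by apply: hf; rewrite mem_head.
exists (Num.min c (f y)); split.
- by rewrite lt_min c0 fy.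
- by rewrite ge_min c1.
- move=> x; rewrite inE => /orP[/eqP ->|hx]; first by rewrite ge_min lexx orbT.
  by rewrite ge_min hc.
Qed.

Lemma sum_tuple_cons (R : realType) (X : finType) (T : nat) (F : (T.+1).-tuple X -> R) :
  \sum_(s : (T.+1).-tuple X) F s = \sum_(x : X) \sum_(t : T.-tuple X) F [tuple of x :: t].
Proof.
rewrite pair_big /=.
rewrite (reindex (fun p : X * T.-tuple X => [tuple of p.1 :: p.2])) /=.
  by apply: eq_bigl.
exists (fun s => (thead s, [tuple of behead s])) => [[x t] _|s _] /=.
  by rewrite theadE; congr pair; apply: val_inj.
by rewrite -tuple_eta.
Qed.

Lemma mkseq_add (T : Type) (f : nat -> T) a b :
  mkseq f (a + b) = mkseq f a ++ mkseq (fun i => f (a + i)%N) b.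
Proof.
rewrite /mkseq iotaD map_cat add0n; congr (_ ++ _).
by rewrite -[in iota a b](addn0 a) iotaDl -map_comp.
Qed.

Section Main2.
Variables (R : realType) (n m : nat) (e : rel 'I_m) (alpha : R)
  (sigma : 'M[R[i]]_n) (rho0 : op R n m).
Hypotheses (hm : (2 <= m)%N) (hs : simple_graph e) (hc : connected_graph e)
  (ha : 0 < alpha < 1).
Local Notation C := R[i].
Local Notation op := (op R n m).
Local Notation zb := (zavg sigma rho0).
Local Notation dv rho := (dev sigma rho zb).

Lemma part_exp q : (forall p, p \in edges e -> 0 < q p) -> \sum_(p <- edges e) q p = 1 ->
  forall l, cconv (fun t => zloc sigma (exp_traj alpha e q rho0 t) l) zb.
Proof.
move=> hq hsum l.
have [qm [qm0 qm1 hqm]] := minpos hq.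
have H : forall t, mc sigma rho0 (exp_traj alpha e q rho0 t) /\
   dv (exp_traj alpha e q rho0 t) <= rho2 m alpha qm ^+ t * dv rho0.
  elim=> [|t [IH1 IH2]] /=; first by split; [exact: mc0 sigma rho0 | rewrite expr0 mul1r].
  split; first exact: (mc_exp alpha hsum IH1).
  apply: le_trans (dev_exp hm hs hc ha qm0 hqm hsum IH1) _.
  rewrite exprS -mulrA ler_wpM2l //; by case/andP: (rho2_range m ha qm0 qm1).
apply: (finish (f := fun t => rho2 m alpha qm ^+ t * dv rho0)).
  by move=> t; apply: le_trans (term_le_dev _ _ _ l) (H t).2.
move=> eps e0; have [N hN] := geom (rho2_range m ha qm0 qm1) (dev_ge0 sigma rho0 zb) e0.
by exists N.
Qed.


Section Rand.
Variables (q : 'I_m * 'I_m -> R).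
Hypotheses (hq : forall p, p \in edges e -> 0 < q p) (hsum : \sum_(p <- edges e) q p = 1).

Definition Ex (T : nat) (rho : op) : R :=
  \sum_(s : T.-tuple ('I_m * 'I_m) | all (fun p => p \in edges e) s)
     (\prod_(i < T) q (tnth s i)) * dv (run alpha s rho).

Lemma Ex_S T (rho : op) : Ex T.+1 rho = \sum_(p <- edges e) q p * Ex T (gossip_step alpha p rho).
Proof.
rewrite /Ex big_mkcond sum_tuple_cons.
rewrite [RHS]big_uniq /=; last by rewrite /edges filter_uniq // enum_uniq.
rewrite [RHS]big_mkcond /=; apply: eq_bigr => x _.
case hx: (x \in edges e) => /=; last by rewrite big1.
rewrite mulr_sumr [RHS]big_mkcond /=; apply: eq_bigr => t _.
case: (all _ t) => //=.
by rewrite big_ord_recl tnth0 mulrA; congr (_ * _ * _); apply: eq_bigr => i _; rewrite tnthS.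
Qed.

Lemma Ex_bound (qm : R) : 0 < qm -> qm <= 1 -> (forall p, p \in edges e -> qm <= q p) ->
  forall T (rho : op), mc sigma rho0 rho -> Ex T rho <= rho2 m alpha qm ^+ T * dv rho.
Proof.
move=> qm0 qm1 hqm; have /andP[r0 r1] := rho2_range m ha qm0 qm1.
elim=> [|T IH] rho hmc.
  rewrite /Ex (eq_bigl (pred1 [tuple])); last by move=> s; rewrite tuple0 /=; symmetry; apply/eqP.
  by rewrite big_pred1_eq big_ord0 expr0 !mul1r.
rewrite Ex_S.
apply: (le_trans (y := \sum_(p <- edges e) q p * (rho2 m alpha qm ^+ T * dv (gossip_step alpha p rho)))).
  rewrite big_seq [X in _ <= X]big_seq; apply: ler_sum => p hp.
  rewrite ler_wpM2l ?IH //; first by rewrite ltW ?hq.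
  exact: mc_step.
under eq_bigr => p _ do rewrite mulrCA.
rewrite -mulr_sumr exprSr -mulrA ler_wpM2l ?exprn_ge0 //.
exact: (dev_rand hm hs hc ha qm0 hqm hsum hmc).
Qed.

Lemma part_rand delta eps : 0 < delta -> 0 < eps ->
  exists T : nat, prob_traj alpha e q rho0 T (fun rho => dv rho > eps * dv rho0) < delta.
Proof.
move=> d0 e0.
have [qm [qm0 qm1 hqm]] := minpos hq.
have /andP[r0 r1] := rho2_range m ha qm0 qm1.
have [T hT] := pow_small (rho2_range m ha qm0 qm1) (mulr_gt0 d0 e0).
exists T.
have hD0 := dev_ge0 sigma rho0 zb.
have hmono : forall s : T.-tuple ('I_m * 'I_m), all (fun p => p \in edges e) s ->
    dv (run alpha s rho0) <= dv rho0.
  by move=> s /allP hs'; apply: (@dev_mono _ _ _ e alpha sigma ha) => p hp; apply: hs'.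
have hprod : forall s : T.-tuple ('I_m * 'I_m), all (fun p => p \in edges e) s ->
    0 <= \prod_(i < T) q (tnth s i).
  move=> s /allP hs'; apply: prodr_ge0 => i _; apply: ltW; apply: hq; apply: hs'.
  exact: mem_tnth.
rewrite /prob_traj.
case: (eqVneq (dv rho0) 0) => [D0|D0].
  rewrite big1 // => s hsa.
  have := hmono s hsa; rewrite D0 mulr0 => h.
  by rewrite ltNge h mulr0.
have Dp : 0 < dv rho0 by rewrite lt_def D0 hD0.
apply: (le_lt_trans (y := Ex T rho0 / (eps * dv rho0))).
  rewrite /Ex mulr_suml; apply: ler_sum => s hsa.
  rewrite -mulrA ler_wpM2l ?hprod //.
  case h: (_ < _) => /=; last by rewrite divr_ge0 ?dev_ge0 // mulr_ge0 // ltW.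
  by rewrite ler_pdivlMr ?mulr_gt0 // mul1r ltW.
rewrite ltr_pdivrMr ?mulr_gt0 //.
apply: (le_lt_trans (Ex_bound qm0 qm1 hqm T (mc0 sigma rho0))).
by rewrite mulrA ltr_pM2r.
Qed.
End Rand.


Lemma run_cat s1 s2 (rho : op) : run alpha (s1 ++ s2) rho = run alpha s2 (run alpha s1 rho).
Proof. by rewrite /run foldl_cat. Qed.

Lemma part_per (es : seq ('I_m * 'I_m)) (sel : nat -> 'I_m * 'I_m) :
  perm_eq es (edges e) -> (forall t, sel t = nth (sel 0%N) es (t %% size es)) ->
  forall l, cconv (fun t => zloc sigma (traj alpha sel rho0 t) l) zb.
Proof.
move=> hp hsel l; set K := size es.
have hmcT : forall t, mc sigma rho0 (traj alpha sel rho0 t).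
  by move=> t; apply: mc_run; apply: mc0.
case: (posnP K) => K0.
  have E0 : edges e = [::].
    by apply/size0nil; rewrite -(perm_size hp).
  apply: (finish (f := fun _ => 0)).
    move=> t; apply: le_trans (term_le_dev _ _ _ l) _.
    have [h1 h2] := hmcT t.
    rewrite dev_eq -h1 -h2.
    have hf1 := fiedler (ur sigma (traj alpha sel rho0 t)) (m0 hm) hs hc.
    have hf2 := fiedler (ui sigma (traj alpha sel rho0 t)) (m0 hm) hs hc.
    rewrite /S E0 !big_nil !mulr0 in hf1 hf2.
    by rewrite -(addr0 0) lerD.
  by move=> eps e0; exists 0%N.
have hin : forall i, sel i \in edges e.
  by move=> i; rewrite -(perm_mem hp) hsel mem_nth // ltn_pmod.
pose X N := run alpha (mkseq sel (N * K)) rho0.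
have hX : forall N, X N.+1 = run alpha es (X N).
  move=> N; rewrite /X mulSnr mkseq_add run_cat; congr run.
  rewrite -[RHS](mkseq_nth (sel 0%N)); apply/eq_in_map => i.
  rewrite mem_iota add0n => /andP[_ hi] /=.
  by rewrite hsel modnMDl modn_small.
have /andP[r0 r1] := rho1_range m ha K.
have hXb : forall N, mc sigma rho0 (X N) /\ dv (X N) <= rho1 m alpha K ^+ N * dv rho0.
  elim=> [|N [IH1 IH2]].
    by split; [apply: mc_run; apply: mc0 | rewrite /X mul0n /= expr0 mul1r].
  rewrite hX; split; first exact: mc_run.
  apply: le_trans (dev_period hm hs hc ha hp IH1) _.
  by rewrite exprS -mulrA ler_wpM2l.
have ht : forall t, dv (traj alpha sel rho0 t) <= rho1 m alpha K ^+ (t %/ K) * dv rho0.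
  move=> t; rewrite /traj {1}(divn_eq t K) mkseq_add run_cat.
  apply: le_trans (hXb _).2.
  apply: (@dev_mono _ _ _ e alpha sigma ha) => p /mapP [i _ ->]; exact: hin.
apply: (finish (f := fun t => rho1 m alpha K ^+ (t %/ K) * dv rho0)).
  by move=> t; apply: le_trans (term_le_dev _ _ _ l) (ht t).
move=> eps e0; have [N hN] := geom (rho1_range m ha K) (dev_ge0 sigma rho0 zb) e0.
exists (N * K)%N => t hT; apply: hN.
by have := leq_div2r K hT; rewrite mulnK.
Qed.

End Main2.

Theorem corollary1 (R : realType) (n m : nat) (e : rel 'I_m) (alpha : R)
    (sigma : 'M[R[i]]_n) (rho0 : op R n m) :
  (2 <= n)%N -> (2 <= m)%N ->
  simple_graph e -> connected_graph e ->
  0 < alpha < 1 ->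
  (forall a b, sigma a b = (sigma b a)^* ) ->
  density rho0 ->
  let z := fun (rho : op R n m) (l : 'I_m) => zloc sigma rho l in
  let zbar := zavg sigma rho0 in
  (* periodic cycling through all edges *)
  (forall (es : seq ('I_m * 'I_m)) (sel : nat -> 'I_m * 'I_m),
      perm_eq es (edges e) ->
      (forall t, sel t = nth (sel 0%N) es (t %% size es)) ->
      forall l : 'I_m, cconv (fun t => z (traj alpha sel rho0 t) l) zbar) /\
  (* random selection with distribution q: expected evolution *)
  (forall q : 'I_m * 'I_m -> R,
      (forall p, p \in edges e -> 0 < q p) ->
      \sum_(p <- edges e) q p = 1 ->
      forall l : 'I_m, cconv (fun t => z (exp_traj alpha e q rho0 t) l) zbar) /\
  (* random selection with distribution q: individual trajectories *)
  (forall q : 'I_m * 'I_m -> R,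
      (forall p, p \in edges e -> 0 < q p) ->
      \sum_(p <- edges e) q p = 1 ->
      forall delta eps : R, 0 < delta -> 0 < eps ->
      exists T : nat,
        prob_traj alpha e q rho0 T
          (fun rho => dev sigma rho zbar > eps * dev sigma rho0 zbar) < delta).
Proof.
move=> _ hm hs hc ha _ _ z zbar; split; last split.
- by move=> es sel hp hsel l; exact: (part_per sigma rho0 hm hs hc ha hp hsel l).
- by move=> q hq hsum l; exact: (part_exp sigma rho0 hm hs hc ha hq hsum l).
- by move=> q hq hsum delta eps d0 e0; exact: (part_rand sigma rho0 hm hs hc ha hq hsum d0 e0).
Qed.
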